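(* For every infinite binary word $\mathbf{x}$ the following equivalences hold: $\mathbf{x}\in A\iff\mu(\mathbf{x})\in A$; $\mathbf{x}\in B\iff 0\mu(\mathbf{x})\in A$; $\mathbf{x}\in C\iff 00\mu(\mathbf{x})\in A$; $\mathbf{x}\in D\iff 1\mu(\mathbf{x})\in A$; $\mathbf{x}\in E\iff 11\mu(\mathbf{x})\in A$; $\mathbf{x}\in D\iff \mu(\mathbf{x})\in B$; $\mathbf{x}\in B\iff 0\mu(\mathbf{x})\in B$; $\mathbf{x}\in E\iff 1\mu(\mathbf{x})\in B$; $\mathbf{x}\in B\iff \mu(\mathbf{x})\in D$; $\mathbf{x}\in D\iff 1\mu(\mathbf{x})\in D$; $\mathbf{x}\in C\iff 0\mu(\mathbf{x})\in D$; $\mathbf{x}\in I\iff \mu(\mathbf{x})\in E$; $\mathbf{x}\in C\iff 0\mu(\mathbf{x})\in E$; $\mathbf{x}\in F\iff \mu(\mathbf{x})\in C$; $\mathbf{x}\in E\iff 1\mu(\mathbf{x})\in C$; $\mathbf{x}\in J\iff 0\mu(\mathbf{x})\in I$; $\mathbf{x}\in G\iff 1\mu(\mathbf{x})\in F$; $\mathbf{x}\in K\iff \mu(\mathbf{x})\in J$; $\mathbf{x}\in J\iff \mu(\mathbf{x})\in K$; $\mathbf{x}\in B\iff 0\mu(\mathbf{x})\in J$; $\mathbf{x}\in C\iff 0\mu(\mathbf{x})\in K$; $\mathbf{x}\in H\iff \mu(\mathbf{x})\in G$; $\mathbf{x}\in G\iff \mu(\mathbf{x})\in H$; $\mathbf{x}\in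 D\iff 1\mu(\mathbf{x})\in G$; $\mathbf{x}\in E\iff 1\mu(\mathbf{x})\in H$.
   Context: $\Sigma=\{0,1\}$. An overlap is a word $axaxa$ with $a\in\Sigma$, $x\in\Sigma^*$; a word is overlap-free if it has no overlap as a factor. $\mathcal{O}$ is the set of right-infinite binary overlap-free words, and $\mu$ is the morphism $0\mapsto01$, $1\mapsto10$. Define the following subsets of $\Sigma^\omega$: $A=\mathcal{O}$; $B=\{\mathbf{x}: 1\mathbf{x}\in\mathcal{O}\}$; $C=\{\mathbf{x}: 1\mathbf{x}\in\mathcal{O}$ and $\mathbf{x}$ begins with $101\}$; $D=\{\mathbf{x}: 0\mathbf{x}\in\mathcal{O}\}$; $E=\{\mathbf{x}: 0\mathbf{x}\in\mathcal{O}$ and $\mathbf{x}$ begins with $010\}$; $F=\{\mathbf{x}: 0\mathbf{x}\in\mathcal{O}$ and $\mathbf{x}$ begins with $11\}$; $G=\{\mathbf{x}: 0\mathbf{x}\in\mathcal{O}$ and $\mathbf{x}$ begins with $1\}$; $H=\{\mathbf{x}: 1\mathbf{x}\in\mathcal{O}$ and $\mathbf{x}$ begins with $1\}$; $I=\{\mathbf{x}: 1\mathbf{x}\in\mathcal{O}$ and $\mathbf{x}$ begins with $00\}$; $J=\{\mathbf{x}: 1\mathbf{x}\in\mathcal{O}$ and $\mathbf{x}$ begins with $0\}$; $K=\{\mathbf{x}: 0\mathbf{x}\in\mathcal{O}$ and $\mathbf{x}$ begins with $0\}$. *)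

(* Defs.v *)
(* Binary alphabet Sigma = {0,1} encoded as bool: 0 = false, 1 = true. *)
From mathcomp Require Import all_boot.
Set Implicit Arguments. Unset Strict Implicit. Unset Printing Implicit Defensive.

Definition word := nat -> bool.

Definition factor (w : word) (i n : nat) : seq bool := mkseq (fun k => w (i + k)) n.

Definition is_overlap (u : seq bool) : Prop :=
  exists (a : bool) (x : seq bool), u = a :: x ++ a :: x ++ [:: a].

Definition overlap_free (w : word) : Prop :=
  forall i n, ~ is_overlap (factor w i n).

Definition pre (a : bool) (w : word) : word :=
  fun n => if n is m.+1 then w m else a.

Definition begins (s : seq bool) (w : word) : Prop :=
  factor w 0 (size s) = s.

(* the Thue-Morse morphism mu : 0 -> 01, 1 -> 10, extended to infinite words *)
Definition mu (w : word) : word := fun n => if odd n then ~~ w n./2 else w n./2.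

Definition LangA (x : word) : Prop := overlap_free x.
Definition LangB (x : word) : Prop := overlap_free (pre true x).
Definition LangC (x : word) : Prop := overlap_free (pre true x) /\ begins [:: true; false; true] x.
Definition LangD (x : word) : Prop := overlap_free (pre false x).
Definition LangE (x : word) : Prop := overlap_free (pre false x) /\ begins [:: false; true; false] x.
Definition LangF (x : word) : Prop := overlap_free (pre false x) /\ begins [:: true; true] x.
Definition LangG (x : word) : Prop := overlap_free (pre false x) /\ begins [:: true] x.
Definition LangH (x : word) : Prop := overlap_free (pre true x) /\ begins [:: true] x.
Definition LangI (x : word) : Prop := overlap_free (pre true x) /\ begins [:: false; false] x.
Definition LangJ (x : word) : Prop := overlap_free (pre true x) /\ begins [:: false] x.
Definition LangK (x : word) : Prop := overlap_free (pre false x) /\ begins [:: false] x.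

(* Main.v *)
Require Import Defs.
From mathcomp Require Import all_boot.
From Stdlib Require Import Lia FunctionalExtensionality.

Ltac ar := repeat match goal with H : is_true (_ <= _) |- _ => apply (elimT leP) in H end;
  try apply (introT leP);
  repeat match goal with H : context [double _] |- _ => rewrite -addnn in H end;
  repeat match goal with H : context [addn _ _] |- _ => rewrite -plusE in H end;
  repeat match goal with H : context [subn _ _] |- _ => rewrite -minusE in H end;
  rewrite -?addnn -?plusE -?minusE; lia.

Set Implicit Arguments.
Definition ov (w : word) i p := 0 < p /\ forall k, k <= p -> w (i + k) = w (i + k + p).

Lemma nth_factor w i n j : j < n -> nth false (factor w i n) j = w (i + j).
Proof. by move=> h; rewrite /factor nth_mkseq. Qed.

Lemma ov_of w i n : is_overlap (factor w i n) -> exists p, ov w i p.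
Proof.
move=> [a [s E]]; exists (size s).+1; split=> // k Hk.
have Hn : n = (size s).+1 + (size s).+1 + 1.
  have := size_mkseq (fun k => w (i + k)) n; rewrite -/(factor w i n) E /= size_cat /= size_cat /= => hs; ar.
rewrite -addnA -(@nth_factor w i n k) ?(@nth_factor w i n (k + _)); try ar.
rewrite -(@nth_factor w i n (k + _)); last ar.
rewrite E -cat_cons (nth_cat false (a :: s) _ (k + (size s).+1)) /= ltnNge leq_addl /= addnK.
have -> : (a :: s ++ a :: s ++ [:: a]) = (a :: s) ++ ((a :: s) ++ [:: a]) by [].
rewrite (_ : a :: s ++ [:: a] = (a::s) ++ [:: a]) // !nth_cat; case: ltnP => hk //.
have -> : k = size (a :: s) by apply/eqP; rewrite eqn_leq hk andbT.
by rewrite subnn.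
Qed.

Lemma of_ov w i p : ov w i p -> is_overlap (factor w i (p + p + 1)).
Proof.
move=> [hp H]; exists (w i), (factor w i.+1 p.-1).
have hv : w i :: factor w i.+1 p.-1 = factor w i p.
  case: p hp H => // p _ _.
  apply: (@eq_from_nth _ false).
    by rewrite /factor /= size_map size_iota size_mkseq.
  move=> [|j] hj; first by rewrite nth_factor // addn0.
  rewrite /= size_mkseq in hj.
  rewrite (@nth_factor w i p.+1 j.+1) //= nth_factor //.
  by rewrite addSnnS.
have -> : w i :: factor w i.+1 p.-1 ++ w i :: factor w i.+1 p.-1 ++ [:: w i] =
  (w i :: factor w i.+1 p.-1) ++ (w i :: factor w i.+1 p.-1) ++ [:: w i] by [].
rewrite hv; apply: (@eq_from_nth _ false).
  by rewrite /factor !size_cat !size_mkseq /= addnA.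
rewrite /factor size_mkseq => j hj; rewrite -/(factor w i _) nth_factor // nth_cat size_mkseq.
case: ltnP => [hjp|hpj]; first by rewrite nth_factor.
rewrite nth_cat size_mkseq; case: ltnP => [hjp2|hpj2].
  rewrite nth_factor; last ar.
  have := H (j - p); rewrite -addnA subnK // => h; rewrite h //; ar.
have -> : j - p - p = 0 by ar.
have e1 := H 0 (leq0n _); have e2 := H p (leqnn _).
rewrite /= addn0 in e1 *; have -> : j = p + p by ar.
by rewrite e1 e2 addnA.
Qed.

Lemma ofP w : overlap_free w <-> forall i p, ~ ov w i p.
Proof.
split=> [H i p hov|H i n ho].
  by apply: (H i (p + p + 1)); apply: of_ov.
by have [p hp] := @ov_of w i n ho; exact: (H i p hp).
Qed.

Lemma mu_even x n : mu x n.*2 = x n.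
Proof. by rewrite /mu odd_double doubleK. Qed.

Lemma mu_odd x n : mu x (n.*2).+1 = ~~ x n.
Proof. by rewrite /mu /= odd_double /= uphalf_double. Qed.

Lemma ndec n : exists h, n = h.*2 \/ n = (h.*2).+1.
Proof.
exists n./2; have := odd_double_half n; case: (odd n) => /= e; [right|left]; by rewrite -{1}e ?add0n ?add1n.
Qed.

Lemma mu_pre a x : mu (pre a x) = pre a (pre (~~a) (mu x)).
Proof.
apply: functional_extensionality => -[|[|m]] //.
by rewrite /mu /= negbK.
Qed.

Lemma ov_pre a w i p : ov w i p -> ov (pre a w) i.+1 p.
Proof. by case=> hp H; split=> // k hk; rewrite !addSn /= H. Qed.

Lemma ov_unpre a w i p : ov (pre a w) i.+1 p -> ov w i p.
Proof. by case=> hp H; split=> // k hk; have := H k hk; rewrite !addSn. Qed.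

Lemma ov_mu x i p : ov x i p -> ov (mu x) (i.*2).+1 p.*2.
Proof.
case=> hp H; split; first by rewrite double_gt0.
move=> k hk; have [h [ek|ek]] := ndec k; subst k.
  rewrite (_ : (i.*2).+1 + h.*2 + p.*2 = ((i + h + p).*2).+1); last ar.
  rewrite (_ : (i.*2).+1 + h.*2 = ((i + h).*2).+1); last ar.
  by rewrite !mu_odd H //; ar.
rewrite (_ : (i.*2).+1 + (h.*2).+1 + p.*2 = (i + h.+1 + p).*2); last ar.
rewrite (_ : (i.*2).+1 + (h.*2).+1 = (i + h.+1).*2); last ar.
by rewrite !mu_even H //; ar.
Qed.

Lemma mu_ov x i p : ov (mu x) i p -> exists j q, ov x j q.
Proof.
case=> hp H.
have E : forall k a b, k <= p -> i + k = a -> i + k + p = b -> mu x a = mu x b.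
  by move=> k a b hk <- <-; exact: H.
have [q [ep|ep]] := ndec p; subst p.
  have [h [ei|ei]] := ndec i; subst i; exists h, q; (split; first by ar).
  - move=> k hk; have := E k.*2 (h + k).*2 (h + k + q).*2; rewrite !mu_even; apply; ar.
  - move=> k hk; have := E k.*2 (h + k).*2.+1 (h + k + q).*2.+1; rewrite !mu_odd => e.
    by apply/negb_inj; apply: e; ar.
case: q hp H E => [|q] hp H E.
  exfalso; have [h [ei|ei]] := ndec i; subst i.
    have e : mu x h.*2 = mu x h.*2.+1 by apply: (E 0); ar.
    by move: e; rewrite mu_even mu_odd; case: (x h).
  have e : mu x (h.+1).*2 = mu x (h.+1).*2.+1 by apply: (E 1); ar.
  by move: e; rewrite mu_even mu_odd; case: (x _).
have [h [ei|ei]] := ndec i; subst i.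
  exists (h + q.+1), 1; split=> //.
  have e0 : mu x h.*2 = mu x (h + q.+1).*2.+1 by apply: (E 0); ar.
  have e1 : mu x h.*2.+1 = mu x (h + q.+1 + 1).*2 by apply: (E 1); ar.
  have e2 : mu x (h + 1).*2 = mu x (h + q.+1 + 1).*2.+1 by apply: (E 2); ar.
  have e3 : mu x (h + 1).*2.+1 = mu x (h + q.+1 + 2).*2 by apply: (E 3); ar.
  rewrite !mu_even !mu_odd in e0 e1 e2 e3.
  move=> [|[|k]] hk //.
    rewrite addn0; move: (x h) (x (h+1)) (x (h + q.+1)) (x (h + q.+1 + 1)) (x (h+q.+1+2)) e0 e1 e2 e3.
    by do 5 case.
  rewrite -(addnA _ 1 1); move: (x h) (x (h+1)) (x (h + q.+1)) (x (h + q.+1 + 1)) (x (h+q.+1+2)) e0 e1 e2 e3.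
  by do 5 case.
exists h, 1; split=> //.
have e0 : mu x h.*2.+1 = mu x (h + q.+1 + 1).*2 by apply: (E 0); ar.
have e1 : mu x (h + 1).*2 = mu x (h + q.+1 + 1).*2.+1 by apply: (E 1); ar.
have e2 : mu x (h + 1).*2.+1 = mu x (h + q.+1 + 2).*2 by apply: (E 2); ar.
have e3 : mu x (h + 2).*2 = mu x (h + q.+1 + 2).*2.+1 by apply: (E 3); ar.
rewrite !mu_even !mu_odd in e0 e1 e2 e3.
move=> [|[|k]] hk //.
  rewrite addn0; move: (x h) (x (h+1)) (x (h + 2)) (x (h + q.+1 + 1)) (x (h+q.+1+2)) e0 e1 e2 e3.
  by do 5 case.
rewrite -(addnA _ 1 1); move: (x h) (x (h+1)) (x (h + 2)) (x (h + q.+1 + 1)) (x (h+q.+1+2)) e0 e1 e2 e3.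
by do 5 case.
Qed.

Lemma L1 x : overlap_free x <-> overlap_free (mu x).
Proof.
rewrite !ofP; split=> H i p hov.
  by have [j [q hq]] := mu_ov hov; exact: (H j q).
exact: (H _ _ (ov_mu hov)).
Qed.

Lemma LP a x : overlap_free (pre a x) <-> overlap_free (pre (~~a) (mu x)).
Proof.
rewrite !ofP; split=> H i p hov.
  have h1 : ov (mu (pre a x)) i.+1 p by rewrite mu_pre; apply: ov_pre.
  by have [j [q hq]] := mu_ov h1; exact: (H j q).
have := ov_mu hov; rewrite mu_pre => /ov_unpre; exact: H.
Qed.

Lemma LM a x : overlap_free (pre a x) <-> overlap_free (pre a (pre (~~a) (mu x))).
Proof. by rewrite -mu_pre; apply: L1. Qed.

Lemma begins1 a x : begins [:: a] x <-> x 0 = a.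
Proof. by rewrite /begins /factor /mkseq /=; split=> [[]|->]. Qed.

Lemma begins2 a b x : begins [:: a; b] x <-> x 0 = a /\ x 1 = b.
Proof. by rewrite /begins /factor /mkseq /=; split=> [[-> ->]|[-> ->]]. Qed.

Lemma begins3 a b c x : begins [:: a; b; c] x <-> x 0 = a /\ x 1 = b /\ x 2 = c.
Proof. by rewrite /begins /factor /mkseq /=; split=> [[-> -> ->]|[-> [-> ->]]]. Qed.

Lemma ov_fin w i p : 0 < p -> all (fun k => w (i + k) == w (i + k + p)) (iota 0 p.+1) -> ov w i p.
Proof. by move=> hp /allP H; split=> // k hk; apply/eqP; apply: H; rewrite mem_iota. Qed.

Lemma LQ b x : (overlap_free (pre (~~b) x) /\ x 0 = ~~b /\ x 1 = b /\ x 2 = ~~b)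
  <-> overlap_free (pre b (pre b (mu x))).
Proof.
split.
  move=> [hf [c0 [c1 c2]]]; apply/ofP => -[|i] p.
    case=> hp H.
    have g : forall k, k <= p -> pre b (pre b (mu x)) k = pre b (pre b (mu x)) (k + p).
      by move=> k hk; have := H k hk; rewrite add0n.
    case: p hp H g => [|[|[|[|m]]]] // hp H g.
    - by have := g 1 isT; rewrite /= /mu /= c0; case: b {hf c0 c1 c2 H g}.
    - by have := g 0 isT; rewrite /= /mu /= c0; case: b {hf c0 c1 c2 H g}.
    - by have := g 3 isT; rewrite -plusE /= /mu /= c0 c2; case: b {hf c0 c1 c2 H g}.
    have g' : forall k, k <= m.+4 -> pre b (pre b (mu x)) k = mu x (k + m.+2).
      by move=> k hk; rewrite g // (_ : k + m.+4 = (k + m.+2).+2) //; ar.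
    have e0 := g' 0 isT; have e1 := g' 1 isT; have e3 := g' 3 isT; have e4 := g' 4 isT.
    rewrite /= in e0 e1 e3 e4.
    have [h [em|em]] := ndec m; subst m.
      rewrite (_ : 0 + (h.*2).+2 = (h.+1).*2) in e0; last ar.
      rewrite (_ : 1 + (h.*2).+2 = (h.+1).*2.+1) in e1; last ar.
      rewrite mu_even in e0; rewrite mu_odd in e1.
      by move: e0 e1; case: (x h.+1); case: b {hf c0 c1 c2 H g g' e3 e4}.
    rewrite (_ : 3 + (h.*2).+1.+2 = (h.+3).*2) in e3; last ar.
    rewrite (_ : 4 + (h.*2).+1.+2 = (h.+3).*2.+1) in e4; last ar.
    rewrite mu_even in e3; rewrite mu_odd in e4.
    move: e3 e4; rewrite /mu /= c0 c1.
    by case: (x h.+3); case: b {hf c0 c1 c2 H g g' e0 e1}.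
  move/ov_unpre; move: hf; rewrite LP negbK ofP; exact.
move/ofP => H.
have hf : overlap_free (pre (~~b) x).
  by rewrite LP negbK ofP => i p /(ov_pre b); apply: H.
have c0 : x 0 = ~~ b.
  case E0 : (x 0 == ~~ b); first by apply/eqP.
  exfalso; apply: (H 0 1); apply: ov_fin => //=; rewrite /mu /=.
  by move: E0; clear H hf; case: (x 0); case: b.
have c1 : x 1 = b.
  case E1 : (x 1 == b); first by apply/eqP.
  exfalso; apply: (H 1 2); apply: ov_fin => //=; rewrite /mu /= c0.
  by move: E1; clear H hf c0; case: (x 1); case: b.
have c2 : x 2 = ~~ b.
  case E2 : (x 2 == ~~ b); first by apply/eqP.
  exfalso; apply: (H 0 3); apply: ov_fin => //=; rewrite /mu /= c0 c1.
  by move: E2; clear H hf c0 c1; case: (x 2); case: b.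
by [].
Qed.

Ltac T K x := move: K; rewrite ?begins1 ?begins2 ?begins3 /mu /=;
  case: (x 0); case: (x 1); case: (x 2); intuition congruence.

Theorem lemma2 (x : word) :
  (LangA x <-> LangA (mu x)) /\
  (LangB x <-> LangA (pre false (mu x))) /\
  (LangC x <-> LangA (pre false (pre false (mu x)))) /\
  (LangD x <-> LangA (pre true (mu x))) /\
  (LangE x <-> LangA (pre true (pre true (mu x)))) /\
  (LangD x <-> LangB (mu x)) /\
  (LangB x <-> LangB (pre false (mu x))) /\
  (LangE x <-> LangB (pre true (mu x))) /\
  (LangB x <-> LangD (mu x)) /\
  (LangD x <-> LangD (pre true (mu x))) /\
  (LangC x <-> LangD (pre false (mu x))) /\
  (LangI x <-> LangE (mu x)) /\
  (LangC x <-> LangE (pre false (mu x))) /\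
  (LangF x <-> LangC (mu x)) /\
  (LangE x <-> LangC (pre true (mu x))) /\
  (LangJ x <-> LangI (pre false (mu x))) /\
  (LangG x <-> LangF (pre true (mu x))) /\
  (LangK x <-> LangJ (mu x)) /\
  (LangJ x <-> LangK (mu x)) /\
  (LangB x <-> LangJ (pre false (mu x))) /\
  (LangC x <-> LangK (pre false (mu x))) /\
  (LangH x <-> LangG (mu x)) /\
  (LangG x <-> LangH (mu x)) /\
  (LangD x <-> LangG (pre true (mu x))) /\
  (LangE x <-> LangH (pre true (mu x))).
Proof.
have P1 := LP true x; have P0 := LP false x; have M1 := LM true x; have M0 := LM false x.
have Q0 := LQ false x; have Q1 := LQ true x; have A1 := L1 x.
rewrite /= in P1 P0 M1 M0 Q0 Q1.
rewrite /LangA /LangB /LangC /LangD /LangE /LangF /LangG /LangH /LangI /LangJ /LangK.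
split; first by [].
split; first by T P1 x.
split; first by T Q0 x.
split; first by T P0 x.
split; first by T Q1 x.
split; first by T P0 x.
split; first by T M1 x.
split; first by T Q1 x.
split; first by T P1 x.
split; first by T M0 x.
split; first by T Q0 x.
split; first by T P1 x.
split; first by T Q0 x.
split; first by T P0 x.
split; first by T Q1 x.
split; first by T M1 x.
split; first by T M0 x.
split; first by T P0 x.
split; first by T P1 x.
split; first by T M1 x.
split; first by T Q0 x.
split; first by T P1 x.
split; first by T P0 x.
split; first by T M0 x.
by T Q1 x.
Qed.
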